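(* Let $P=(U,R)$ be a partial order. Then $P$ is a linear order if and only if $NC(P)$ is a chain graph.
   Context: For $U=\{u_1,\dots,u_n\}$ and a disjoint copy $V=\{v_1,\dots,v_n\}$, $NC(P)=(U,V,E)$ is the bipartite graph with $u_iv_j\in E$ iff $u_i\le_P u_j$ (i.e. $u_i<_Pu_j$ or $i=j$). A bipartite graph is a chain graph if, for any two vertices in the same color class, one neighborhood contains the other. A linear order is a partial order in which every two distinct elements are comparable. *)

(* Defs.v *)
From HB Require Import structures.
From mathcomp Require Import all_boot.
Set Implicit Arguments. Unset Strict Implicit. Unset Printing Implicit Defensive.

Definition partial_order (T : finType) (le : rel T) : Prop :=
  reflexive le /\ antisymmetric le /\ transitive le.

Definition linear_order (T : finType) (le : rel T) : Prop :=
  partial_order le /\ forall x y : T, x != y -> le x y || le y x.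

Record bigraph := BiGraph {
  bg_left : finType;
  bg_right : finType;
  bg_edge : bg_left -> bg_right -> bool }.

Definition nbhd_left (G : bigraph) (a : bg_left G) : {set bg_right G} :=
  [set b | bg_edge a b].
Definition nbhd_right (G : bigraph) (b : bg_right G) : {set bg_left G} :=
  [set a | bg_edge a b].

Definition chain_graph (G : bigraph) : Prop :=
  (forall a1 a2 : bg_left G,
      (nbhd_left a1 \subset nbhd_left a2) || (nbhd_left a2 \subset nbhd_left a1)) /\
  (forall b1 b2 : bg_right G,
      (nbhd_right b1 \subset nbhd_right b2) || (nbhd_right b2 \subset nbhd_right b1)).

(* Disjoint copy V of the ground set U = T. *)
Inductive vcopy (T : Type) := VCopy of T.
Definition vcopy_val (T : Type) (v : vcopy T) : T := let: VCopy x := v in x.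
Lemma vcopy_valK (T : Type) : cancel (@vcopy_val T) (@VCopy T).
Proof. by case. Qed.
HB.instance Definition _ (T : finType) := Finite.copy (vcopy T) (can_type (@vcopy_valK T)).

Definition NC (T : finType) (le : rel T) : bigraph :=
  @BiGraph T (vcopy T) (fun u v => le u (vcopy_val v)).

(* Main.v *)
Require Import Defs.
From mathcomp Require Import all_boot.

Theorem lemma9 (T : finType) (le : rel T) :
  partial_order le -> (linear_order le <-> chain_graph (NC le)).
Proof.
move=> [refl [anti tr]]; split.
- move=> [_ tot]; split.
  + move=> a1 a2 /=.
    have H : forall a b, le a b -> nbhd_left (G:=NC le) b \subset nbhd_left (G:=NC le) a.
      move=> a b ab; apply/subsetP=> v; rewrite !inE /= => bv; exact: tr ab bv.
    case: (eqVneq a1 a2) => [->|ne]; first by rewrite subxx.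
    by case/orP: (tot _ _ ne) => h; rewrite (H _ _ h) ?orbT.
  + move=> b1 b2 /=.
    have H : forall a b : vcopy T, le (vcopy_val a) (vcopy_val b) ->
        nbhd_right (G:=NC le) a \subset nbhd_right (G:=NC le) b.
      move=> a b ab; apply/subsetP=> v; rewrite !inE /= => bv; exact: tr bv ab.
    case: (eqVneq (vcopy_val b1) (vcopy_val b2)) => [e|ne].
      by rewrite H ?e.
    by case/orP: (tot _ _ ne) => h; rewrite (H _ _ h) ?orbT.
- move=> [cl _]; split; first by [].
  move=> x y _.
  case/orP: (cl x y) => /subsetP S.
  + have h : VCopy x \in nbhd_left (G:=NC le) x by rewrite inE /= refl.
    move: (S _ h); rewrite inE /= => ->; by rewrite orbT.
  + have h : VCopy y \in nbhd_left (G:=NC le) y by rewrite inE /= refl.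
    by move: (S _ h); rewrite inE /= => ->.
Qed.
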